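(* Let $q$ be a prime, let $m \geq 1$ be an integer, and let $u$ be an integer with $0 \leq u \leq q-2$. Let $\mathcal{RM}_q(u,m) \subseteq \mathbb{F}_q^{q^m}$ be the code consisting of the vectors $\left(f(\alpha)\right)_{\alpha \in \mathbb{F}_q^m}$ (coordinates indexed by the points of $\mathbb{F}_q^m$), where $f$ ranges over all polynomials in $\mathbb{F}_q[x_1,\ldots,x_m]$ of total degree at most $u$, and let $\mathcal{RM}^{\perp}_q(u,m)$ be its dual code with respect to the standard bilinear form. Then for any $u+2$ distinct points of $\mathbb{F}_q^m$ lying on a common affine line, i.e. points $\mathbf{p}_1, \mathbf{p}_1 + t_1\mathbf{h}, \ldots, \mathbf{p}_1 + t_{u+1}\mathbf{h}$ with $\mathbf{p}_1 \in \mathbb{F}_q^m$, $\mathbf{h} \in \mathbb{F}_q^m\setminus\{\mathbf{0}\}$ and $t_1,\ldots,t_{u+1}$ distinct nonzero elements of $\mathbb{F}_q$, there exists a codeword of $\mathcal{RM}^{\perp}_q(u,m)$ of minimum nonzero Hamming weight whose support is exactly this set of $u+2$ points.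
   Context: The support of a vector is the set of coordinates where it is nonzero, identified with a set of points of $\mathbb{F}_q^m$. For $u \leq q-2$ the minimum nonzero Hamming weight of $\mathcal{RM}^{\perp}_q(u,m)$ equals $u+2$. *)

(* Defs.v *)
From HB Require Import structures.
From mathcomp Require Import all_boot all_order all_algebra all_field.
From mathcomp Require Import mpoly.
Set Implicit Arguments. Unset Strict Implicit. Unset Printing Implicit Defensive.
Import GRing.Theory.
Local Open Scope ring_scope.

(* Points of F^m are row vectors 'rV[F]_m; a word of length q^m is a function
   from points to F. *)
Definition word (F : finFieldType) (m : nat) := {ffun 'rV[F]_m -> F}.

Definition evalpt (F : finFieldType) (m : nat) (f : {mpoly F[m]}) (a : 'rV[F]_m) : F :=
  f.@[fun i => a ord0 i].

(* RM_q(u,m): evaluation vectors of polynomials of total degree <= u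
   (msize f = 1 + total degree of f, and msize 0 = 0). *)
Definition inRM (F : finFieldType) (u m : nat) (c : word F m) : Prop :=
  exists f : {mpoly F[m]}, (msize f <= u.+1)%N /\ c = [ffun a => evalpt f a].

Definition dotw (F : finFieldType) (m : nat) (c w : word F m) : F :=
  \sum_(a : 'rV[F]_m) c a * w a.

Definition inRMdual (F : finFieldType) (u m : nat) (c : word F m) : Prop :=
  forall w : word F m, inRM u w -> dotw c w = 0.

Definition wsupp (F : finFieldType) (m : nat) (c : word F m) : {set 'rV[F]_m} :=
  [set a | c a != 0].

Definition hweight (F : finFieldType) (m : nat) (c : word F m) : nat := #|wsupp c|.

(* Main.v *)
Require Import Defs.
From HB Require Import structures.
From mathcomp Require Import all_boot all_order all_algebra all_field.
From mathcomp Require Import mpoly.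
From mathcomp Require Import zify.
Import GRing.Theory.
Local Open Scope ring_scope.


Section MW.
Variables (F : finFieldType) (m : nat).

Lemma msize_prod_lin (I : Type) (r : seq I) (G : I -> {mpoly F[m]}) :
  (forall i, G i != 0 /\ (msize (G i) <= 2)%N) ->
  \prod_(i <- r) G i != 0 /\ (msize (\prod_(i <- r) G i) <= (size r).+1)%N.
Proof.
move=> HG; elim: r => [|i r [nz sz]]; first by rewrite big_nil msize1 oner_neq0.
have [nzi szi] := HG i.
rewrite big_cons mulf_neq0 //; split => //.
rewrite msizeM //=.
rewrite -subn1; move: szi sz; set a := mmeasure _ (G i); set b := mmeasure _ _.
clearbody a b.
lia.
Qed.

Lemma sumX1 (g : 'rV[F]_m -> F) (y : 'rV[F]_m) :
  \sum_(x : 'rV[F]_m) (x == y)%:R * g x = g y.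
Proof.
rewrite (bigD1 y) //= eqxx mul1r big1 ?addr0 // => x /negbTE ->; by rewrite mul0r.
Qed.

Lemma min_weight u (c : word F m) : inRMdual u c -> c != 0 -> (u.+2 <= hweight c)%N.
Proof.
move=> Hd nz; rewrite leqNgt; apply/negP => Hw.
have [a ca] : exists a, c a != 0.
  apply/existsP; move: nz; apply: contraR; rewrite negb_exists => /forallP H.
  by apply/eqP/ffunP => x; rewrite ffunE; have := H x; rewrite negbK => /eqP.
have aS : a \in wsupp c by rewrite inE.
set B := wsupp c :\ a.
have cB : (#|B| <= u)%N.
  move: Hw; rewrite /hweight (cardsD1 a) aS /= add1n ltnS; done.
pose L (b : 'rV[F]_m) : {mpoly F[m]} :=
  if [pick i | a ord0 i != b ord0 i] is Some i then 'X_i - (b ord0 i)%:MP else 1.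
have Lb : forall b, evalpt (L b) b = 0 \/ b = a.
  move=> b; rewrite /L; case: pickP => [i _|H]; first by left; rewrite /evalpt mevalB mevalXU mevalC subrr.
  right; apply/rowP => j; have := H j; rewrite /= => /negbFE/eqP ->//.
have La : forall b, evalpt (L b) a != 0.
  move=> b; rewrite /L; case: pickP => [i Hi|_]; last by rewrite /evalpt meval1 oner_neq0.
  by rewrite /evalpt mevalB mevalXU mevalC subr_eq0.
have LG : forall b, L b != 0 /\ (msize (L b) <= 2)%N.
  move=> b; split; first by apply: contra (La b) => /eqP ->; rewrite /evalpt meval0.
  rewrite /L; case: pickP => [i _|_]; last by rewrite msize1.
  apply: (leq_trans (msizeD_le _ _)); rewrite msizeN msizeC geq_max.
  by rewrite msizeX mdeg1; case: (_ != 0).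
pose f := \prod_(b <- enum B) L b.
have [_ szf] := @msize_prod_lin _ (enum B) L LG.
have Hf : inRM u [ffun x => evalpt f x].
  exists f; split => //; apply: (leq_trans szf); rewrite -cardE; lia.
have := Hd _ Hf; rewrite /dotw (bigD1 a) //= big1 ?addr0.
  rewrite ffunE /f /evalpt rmorph_prod /=; apply/eqP; rewrite mulf_neq0 //.
  by rewrite prodf_seq_neq0; apply/allP => b _; apply: La.
move=> x xa; rewrite ffunE.
have [cx|cx] := eqVneq (c x) 0; first by rewrite cx mul0r.
have xB : x \in enum B by rewrite mem_enum !inE xa /= cx.
have [Hx|/eqP] := Lb x; last by rewrite (negbTE xa).
move: Hx; rewrite /f /evalpt rmorph_prod /= (big_rem x xB) /= => ->.
by rewrite mul0r mulr0.
Qed.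
End MW.


Section Line.
Variables (F : finFieldType) (m : nat) (p1 h : 'rV[F]_m).

Lemma size_prod_exp (I : Type) (r : seq I) (G : I -> {poly F}) (k : I -> nat) :
  (forall i, (size (G i) <= 2)%N) ->
  (size (\prod_(i <- r) G i ^+ k i)%R <= (\sum_(i <- r) k i).+1)%N.
Proof.
move=> HG; elim: r => [|i r IH]; first by rewrite !big_nil size_poly1.
rewrite !big_cons; apply: (leq_trans (size_mul_leq _ _)).
have H1 : (size (G i ^+ k i)%R <= (k i).+1)%N.
  apply: (leq_trans (size_poly_exp_leq _ _)); rewrite ltnS.
  have : ((size (G i)).-1 <= 1)%N by have := HG i; case: (size (G i)) => [|[|[|]]].
  by move=> /leq_mul => /(_ (k i) (k i) (leqnn _)); rewrite mul1n.
move: H1 IH; set a := size (G i ^+ k i)%R; set b := size (\prod_(j <- r) (G j ^+ k j))%R.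
set s := (\sum_(j <- r) k j)%N; clearbody a b s => H1 H2.
rewrite -subn1; lia.
Qed.

Lemma line_poly (f : {mpoly F[m]}) : exists P : {poly F},
  (size P <= msize f)%N /\ forall s, evalpt f (p1 + s *: h) = P.[s].
Proof.
pose P := \sum_(mo <- msupp f) f@_mo *:
   \prod_(i < m) ((p1 ord0 i)%:P + (h ord0 i) *: 'X) ^+ mo i.
exists P; split.
  apply: (leq_trans (size_sum _ _ _)); apply/bigmax_leqP_seq => mo mof _.
  apply: (leq_trans (size_scale_leq _ _)).
  apply: leq_trans (msize_mdeg_lt mof); rewrite mdegE.
  apply: size_prod_exp => i.
  apply: (leq_trans (size_polyD _ _)); rewrite geq_max size_polyC.
  rewrite (leq_trans (size_scale_leq _ _)) ?size_polyX //.
  by case: (_ != 0).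
move=> s; rewrite /evalpt mevalE /P horner_sum; apply: eq_bigr => mo _.
rewrite hornerZ horner_prod; congr (_ * _); apply: eq_bigr => i _.
by rewrite horner_exp hornerD hornerC hornerZ hornerX !mxE mulrC.
Qed.
End Line.


Lemma construct (F : finFieldType) m u (p1 h : 'rV[F]_m) (T : {set F}) :
  h != 0 -> (u.+2 <= #|T|)%N -> exists c : word F m,
  [/\ inRMdual u c, c != 0 & wsupp c \subset [set p1 + s *: h | s in T]].
Proof.
move=> hnz cT.
pose n := #|T|.
pose e : 'I_n -> F := enum_val (A := mem T).
pose A : 'M[F]_(n, u.+1) := \matrix_(j, k) (e j) ^+ k.
have nf : ~~ row_free A.
  rewrite /row_free; apply/negP => /eqP Hr.
  have := rank_leq_col A; rewrite Hr /n; lia.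
have [v /sub_kermxP vA vnz] : exists2 v : 'rV_n, (v <= kermx A)%MS & v != 0.
  by apply/rowV0Pn; rewrite kermx_eq0.
pose pt (s : F) := p1 + s *: h.
have pt_inj : injective pt.
  move=> s s' /addrI /eqP; rewrite -subr_eq0 -scalerBl scaler_eq0 (negbTE hnz) orbF.
  by rewrite subr_eq0 => /eqP.
pose c : word F m := [ffun x => \sum_(j < n) v ord0 j * (x == pt (e j))%:R].
exists c; split.
- move=> w [f [szf ->]].
  rewrite /dotw.
  under eq_bigr => x _ do rewrite ffunE big_distrl /=.
  rewrite exchange_big /=.
  have [P [szP HP]] := @line_poly _ _ p1 h f.
  transitivity (\sum_(j < n) v ord0 j * P.[e j]).
    apply: eq_bigr => j _.
    under eq_bigr => x _ do rewrite ffunE mulrAC mulrC.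
    by rewrite (@sumX1 _ _ (fun x => v ord0 j * evalpt f x)) /pt HP.
  under eq_bigr => j _ do rewrite (horner_coef_wide _ (leq_trans szP szf)) big_distrr /=.
  rewrite exchange_big /=; apply: big1 => k _.
  have := congr1 (fun M : 'rV_u.+1 => M ord0 k) vA; rewrite !mxE => H.
  transitivity (P`_k * \sum_(j < n) v ord0 j * A j k); last by rewrite H mulr0.
  by rewrite big_distrr; apply: eq_bigr => j _; rewrite mxE mulrCA.
- move: vnz; apply: contraNneq => c0; apply/eqP/rowP => j; rewrite mxE.
  have := congr1 (fun g : word F m => g (pt (e j))) c0; rewrite !ffunE => <-.
  rewrite (bigD1 j) //= eqxx mulr1 big1 ?addr0 ?ord1 // => k kj.
  suff -> : (pt (e j) == pt (e k)) = false by rewrite mulr0.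
  apply/negbTE; apply: contra kj => /eqP /pt_inj /enum_val_inj ->; by [].
- apply/subsetP => x; rewrite inE ffunE; apply: contraNT => xn.
  apply/eqP; apply: big1 => j _.
  suff -> : (x == pt (e j)) = false by rewrite mulr0.
  apply/negbTE; apply: contra xn => /eqP ->; apply/imsetP; exists (e j) => //.
  exact: enum_valP.
Qed.


Theorem mainTheorem2 (q : nat) (Hq : prime q) (m : nat) (Hm : (1 <= m)%N)
  (u : nat) (Hu : (u <= q - 2)%N)
  (p1 h : 'rV['F_q]_m) (Hh : h != 0)
  (t : 'I_u.+1 -> 'F_q) (Ht_inj : injective t) (Ht_nz : forall i, t i != 0) :
  exists c : word 'F_q m,
    [/\ inRMdual u c,
        c != 0,
        (forall c' : word 'F_q m, inRMdual u c' -> c' != 0 ->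
           (hweight c <= hweight c')%N)
      & wsupp c = p1 |: [set p1 + t i *: h | i : 'I_u.+1]].
Proof.
pose T : {set 'F_q} := 0 |: [set t i | i : 'I_u.+1].
have cT : #|T| = u.+2.
  rewrite cardsU1 card_imset // card_ord.
  have -> : (0 \notin [set t i | i : 'I_u.+1]) = true.
    apply/negP => /imsetP [i _ /esym]; apply/eqP; exact: Ht_nz.
  by [].
have [c [cd cnz csub]] := @construct _ _ u p1 h T Hh (eq_leq (esym cT)).
have wc := @min_weight _ _ _ _ cd cnz.
pose S' := [set p1 + s *: h | s in T].
have cS : (#|S'| <= u.+2)%N by rewrite -cT leq_imset_card.
have eqS : wsupp c = S'.
  apply/eqP; rewrite eqEcard csub /=; apply: leq_trans cS wc.
exists c; split => //.
  move=> c' c'd c'nz; apply: leq_trans (@min_weight _ _ _ _ c'd c'nz).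
  by rewrite /hweight eqS.
rewrite eqS /S' imsetU1 scale0r addr0; congr (_ |: _).
by rewrite -imset_comp.
Qed.
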